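(* Let $G$ be a group, $Z\leq Z(G)$, and let $\mathcal{C}$ be a $G/Z$-conjugacy class. Let $x\in G$ be such that the image of $x$ in $G/Z$ lies in $\mathcal{C}$, and denote by $\mathcal{C}_x$ the $G$-conjugacy class of $x$. If $\mathcal{K}(G,\mathcal{C}_x)$ is connected, then $\mathcal{K}(G/Z,\mathcal{C})$ is connected. Moreover, if the order $o$ of an element of $\mathcal{C}$ is prime to the order of $Z$, then $x$ can be taken to have order $o$.
   Context: For a group $H$ and a conjugacy class $\mathcal{D}$ of $H$, $\mathcal{K}(H,\mathcal{D})$ denotes the graph with vertex set $\mathcal{D}$ in which distinct $a,b\in\mathcal{D}$ are adjacent iff $C_H(ab)\cap\mathcal{D}\neq\emptyset$. *)

(* Defs.v *)
From mathcomp Require Import all_boot all_fingroup all_solvable.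
Set Implicit Arguments. Unset Strict Implicit. Unset Printing Implicit Defensive.
Local Open Scope group_scope.

Definition Kadj (gT : finGroupType) (H D : {set gT}) : rel gT :=
  fun a b => [&& a \in D, b \in D, a != b & 'C_H[a * b] :&: D != set0].

Definition Kconnected (gT : finGroupType) (H D : {set gT}) : Prop :=
  {in D &, forall a b, connect (Kadj H D) a b}.

(* Main.v *)
Require Import Defs.
From mathcomp Require Import all_boot all_fingroup all_solvable.
Local Open Scope group_scope.

Lemma connect_map (T T' : finType) (e : rel T) (e' : rel T') (f : T -> T') :
  (forall u v, e u v -> connect e' (f u) (f v)) ->
  forall u v, connect e u v -> connect e' (f u) (f v).
Proof.
move=> H u v /connectP [p pth ->] {v}.
elim: p u pth => [|w p IH] u /=; first by rewrite connect0.
move=> /andP [euw pth]; apply: connect_trans (H _ _ euw) (IH _ pth).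
Qed.

Theorem lemma2p4 (gT : finGroupType) (G Z : {group gT}) (C : {set coset_of Z}) :
  Z \subset 'Z(G) -> C \in classes (G / Z) ->
  (forall x, x \in G -> coset Z x \in C ->
     Kconnected G (x ^: G) -> Kconnected (G / Z) C) /\
  (forall c, c \in C -> coprime #[c] #|Z| ->
     exists2 x, x \in G & coset Z x \in C /\ #[x] = #[c]).
Proof.
move=> sZ CG.
have nZG : G \subset 'N(Z) by apply: normal_norm; apply: sub_center_normal.
have [z Gz defC] := imsetP CG.
have sCG : C \subset G / Z by rewrite defC; apply/subsetP => t /imsetP [w Gw ->]; rewrite groupJ.
have NZ : forall g, g \in G -> g \in 'N(Z) by move=> g Gg; apply: (subsetP nZG).
split.
  move=> x Gx Cx Kc.
  have {}defC : C = coset Z x ^: (G / Z) by rewrite defC; apply/esym/class_eqP; rewrite -defC.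
  have imC : forall u, u \in x ^: G -> coset Z u \in C.
    move=> u /imsetP [g Gg ->]; rewrite defC morphJ ?NZ //.
    by apply: memJ_class; apply: mem_quotient.
  have Gcl : forall u, u \in x ^: G -> u \in G.
    by move=> u /imsetP [g Gg ->]; rewrite groupJ.
  have lift : forall a, a \in C -> exists2 u, u \in x ^: G & a = coset Z u.
    move=> a; rewrite defC => /imsetP [w /morphimP [g Ng Gg ->] ->].
    exists (x ^ g); first by apply: memJ_class.
    by rewrite morphJ ?NZ.
  have step := @connect_map _ _ (Kadj G (x ^: G)) (Kadj (G / Z) C) (coset Z).
  move=> a b aC bC.
  have [u ux ->] := lift a aC; have [v vx ->] := lift b bC.
  apply: step; last exact: Kc.
  move=> {ux vx aC bC} u0 v0 /and4P [ux vx _ /set0Pn [w /setIP [/setIP [Gw cw] wx]]].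
  have [euv|neuv] := eqVneq (coset Z u0) (coset Z v0); first by rewrite euv connect0.
  apply: connect1; apply/and4P; split; rewrite ?imC //.
  apply/set0Pn; exists (coset Z w); rewrite inE imC // andbT inE mem_quotient //=.
  move: cw; rewrite !cent1E -!morphM ?groupM ?NZ ?Gcl // => /eqP ->; done.
move=> c cC co.
have /morphimP [y Ny Gy cy] := subsetP sCG c cC.
pose k := chinese #[c] #|Z| 1 0.
exists (y ^+ k); first by rewrite groupX.
have ck : coset Z (y ^+ k) = c.
  rewrite morphX // -cy -expg_mod_order /k chinese_modl // expg_mod_order expg1 //.
rewrite ck; split => //.
apply/eqP; rewrite eqn_dvd; apply/andP; split.
  rewrite order_dvdn -expgM mulnC expgM.
  have yZ : y ^+ #[c] \in Z.
    apply: coset_idr; first by rewrite groupX.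
    by rewrite morphX // -cy expg_order.
  rewrite -(@expg_mod _ _ k _ (expg_cardG yZ)) /k chinese_modr // mod0n.
  done.
rewrite -{1}ck; apply: morph_order; exact: groupX.
Qed.
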